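(* Let $\alpha\ge\omega$ be a countable ordinal with Cantor normal form $\alpha=\omega^{\beta_1}\cdot c_1+\omega^{\beta_2}\cdot c_2+\dots+\omega^{\beta_l}\cdot c_l$, where $\beta_1>\beta_2>\dots>\beta_l\ge0$ and $1\le c_i<\omega$. Then, regarding $\alpha$ as a linear order, $\mathsf{rk}(\alpha)=\omega\cdot\beta_1+\lfloor\log_2 c_1\rfloor$. In particular, the rank depends only on the leading term of the Cantor normal form.
   Context: An ordinal is regarded as the linear order $(\alpha,\in)$. Let $\mathcal F$ be the class of finite linear orders (language $\{<\}$); countable linear orders are the structures considered; substructures are suborders and $\mathsf{age}(X)$ is the set of finite suborders of $X$. For $A\le B$, $B$ is a prime extension of $A$ if $|B\setminus A|=1$; a realization of $B$ in $X$ (where $A\le X$) is $C\le X$ with $A\le C$ and an order-isomorphism $B\to C$ fixing $A$ pointwise. For $F\in\mathsf{age}(X)$ define by recursion: $\mathsf{rk}_X(F)\ge0$ always; $\mathsf{rk}_X(F)\ge\gamma+1$ iff every prime extension $B\in\mathcal F$ of $F$ has a realization $C$ in $X$ with $\mathsf{rk}_X(C)\ge\gamma$; for limit $\gamma$, $\mathsf{rk}_X(F)\ge\gamma$ iff $\mathsf{rk}_X(F)\ge\delta$ for all $\delta<\gamma$. $\mathsf{rk}_X(F)=\sup\{\gamma:\mathsf{rk}_X(F)\ge\gamma\}$ (or $\infty$ if this holds for all ordinals), and $\mathsf{rk}(X)=\mathsf{rk}_X(\emptyset)$. *)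

(* Defs.v *)
From Stdlib Require Import List Arith Sorted.
Import ListNotations.

Inductive Ord : Type :=
| OZ : Ord
| OS : Ord -> Ord
| OL : (nat -> Ord) -> Ord.

(** The (semantic) order: sound and complete for the interpretation
    OZ = 0, OS a = a+1, OL f = sup_n f n. *)
Inductive ole : Ord -> Ord -> Prop :=
| ole_zero x : ole OZ x
| ole_trans x y z : ole x y -> ole y z -> ole x z
| ole_succ x y : ole x y -> ole (OS x) (OS y)
| ole_cocone x f k : ole x (f k) -> ole x (OL f)
| ole_limiting f x : (forall k, ole (f k) x) -> ole (OL f) x.

Definition olt (a b : Ord) : Prop := ole (OS a) b.
Definition oeq (a b : Ord) : Prop := ole a b /\ ole b a.

Fixpoint ofin (n : nat) : Ord :=
  match n with 0 => OZ | Datatypes.S m => OS (ofin m) end.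

Definition omega : Ord := OL ofin.

Fixpoint oadd (a b : Ord) : Ord :=
  match b with
  | OZ => a
  | OS b' => OS (oadd a b')
  | OL f => OL (fun n => oadd a (f n))
  end.

Fixpoint omul (a b : Ord) : Ord :=
  match b with
  | OZ => OZ
  | OS b' => oadd (omul a b') a
  | OL f => OL (fun n => omul a (f n))
  end.

Fixpoint oexpw (b : Ord) : Ord :=
  match b with
  | OZ => OS OZ
  | OS b' => omul (oexpw b') omega
  | OL f => OL (fun n => oexpw (f n))
  end.

Fixpoint cnf_eval (l : list (Ord * nat)) : Ord :=
  match l with
  | [] => OZ
  | (b, c) :: r => oadd (omul (oexpw b) (ofin c)) (cnf_eval r)
  end.

Definition below (alpha : Ord) : Type := { g : Ord | olt g alpha }.
Definition lt_below (alpha : Ord) (x y : below alpha) : Prop :=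
  olt (proj1_sig x) (proj1_sig y).

Definition inD {T : Type} (F : list T) (u : option T) : Prop :=
  match u with None => True | Some a => In a F end.

(** [R] describes a prime extension B of the finite suborder F:
    carrier = F plus one new point [None]; B is a linear order
    extending the order of F, with the new point distinct from F. *)
Definition is_prime_ext {T : Type} (lt : T -> T -> Prop) (F : list T)
    (R : option T -> option T -> Prop) : Prop :=
  (forall a b, In a F -> In b F -> (R (Some a) (Some b) <-> lt a b)) /\
  ~ R None None /\
  (forall a, In a F -> R None (Some a) \/ R (Some a) None) /\
  (forall u v w, inD F u -> inD F v -> inD F w -> R u v -> R v w -> R u w).

(** x realizes B over F: the map Some a |-> a, None |-> x is an
    order-isomorphism from B onto C = F + {x} fixing F. *)
Definition realizes {T : Type} (lt : T -> T -> Prop) (F : list T)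
    (R : option T -> option T -> Prop) (x : T) : Prop :=
  forall a, In a F -> (lt a x <-> R (Some a) None) /\ (lt x a <-> R None (Some a)).

(** rkge lt g F  <->  rk_X(F) >= g *)
Fixpoint rkge {T : Type} (lt : T -> T -> Prop) (g : Ord) (F : list T) : Prop :=
  match g with
  | OZ => True
  | OS d => forall R, is_prime_ext lt F R ->
              exists x, realizes lt F R x /\ rkge lt d (x :: F)
  | OL f => forall n, rkge lt (f n) F
  end.

Definition rank_is {T : Type} (lt : T -> T -> Prop) (rho : Ord) : Prop :=
  rkge lt rho [] /\ (forall g, rkge lt g [] -> ole g rho).

(* Main.v *)
Require Import Defs.
From Stdlib Require Import List Arith Sorted Classical ClassicalEpsilon FunctionalExtensionality Lia.
Import ListNotations.


Fixpoint le' (a b : Ord) {struct a} : Prop :=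
  match a with
  | OZ => True
  | OS a' => (fix ltb (b : Ord) : Prop :=
               match b with OZ => False | OS b' => le' a' b' | OL g => exists n, ltb (g n) end) b
  | OL f => forall n, le' (f n) b
  end.

Definition lt' a b := le' (OS a) b.

Lemma lt'_Z a : lt' a OZ -> False. Proof. simpl. auto. Qed.
Lemma lt'_S a b : lt' a (OS b) <-> le' a b. Proof. reflexivity. Qed.
Lemma lt'_L a g : lt' a (OL g) <-> exists n, lt' a (g n). Proof. reflexivity. Qed.
Lemma le'_S a b : le' (OS a) b <-> lt' a b. Proof. reflexivity. Qed.
Lemma le'_L f b : le' (OL f) b <-> forall n, le' (f n) b. Proof. reflexivity. Qed.


Lemma le'_cocone x g k : le' x (g k) -> le' x (OL g).
Proof.
  revert g k; induction x as [|x IH|f IH]; intros g k H.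
  - exact I.
  - apply lt'_L. exists k. exact H.
  - apply le'_L. intro n. apply (IH n g k). apply (proj1 (le'_L f (g k)) H n).
Qed.

Lemma le'_refl x : le' x x.
Proof.
  induction x as [|x IH|f IH].
  - exact I.
  - apply le'_S, lt'_S. exact IH.
  - apply le'_L. intro n. apply le'_cocone with n. apply IH.
Qed.

Lemma le'_trans a : forall b c, le' a b -> le' b c -> le' a c.
Proof.
  induction a as [|a IH|f IH]; intros b c H1 H2.
  - exact I.
  - apply le'_S. apply le'_S in H1.
    revert c H2. induction b as [|b IHb|g IHg]; intros c H2.
    + destruct (lt'_Z _ H1).
    + apply lt'_S in H1. apply le'_S in H2.
      induction c as [|c IHc|h IHh].
      * destruct (lt'_Z _ H2).
      * apply lt'_S. apply lt'_S in H2. eauto.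
      * apply lt'_L in H2. destruct H2 as [n Hn]. apply lt'_L. exists n. eauto.
    + apply lt'_L in H1. destruct H1 as [n Hn].
      apply (IHg n Hn). exact (proj1 (le'_L g c) H2 n).
  - apply le'_L. intro n. apply (IH n b c). exact (proj1 (le'_L f b) H1 n). exact H2.
Qed.

Lemma ole_le' a b : ole a b -> le' a b.
Proof.
  induction 1.
  - exact I.
  - eapply le'_trans; eauto.
  - apply le'_S, lt'_S. exact IHole.
  - eapply le'_cocone; eauto.
  - apply le'_L. exact H0.
Qed.

Lemma le'_ole a : forall b, le' a b -> ole a b.
Proof.
  induction a as [|a IH|f IH]; intros b H.
  - constructor.
  - apply le'_S in H. induction b as [|b IHb|g IHg].
    + destruct (lt'_Z _ H).
    + apply ole_succ. apply IH. exact H.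
    + apply lt'_L in H. destruct H as [n Hn]. apply ole_cocone with n. auto.
  - apply ole_limiting. intro n. apply IH. exact (proj1 (le'_L f b) H n).
Qed.

Lemma ole_iff a b : ole a b <-> le' a b.
Proof. split; [apply ole_le'|apply le'_ole]. Qed.

Lemma olt_iff a b : olt a b <-> lt' a b.
Proof. unfold olt. rewrite ole_iff. reflexivity. Qed.

Lemma ole_refl x : ole x x.
Proof. apply le'_ole, le'_refl. Qed.

Lemma ole_tr a b c : ole a b -> ole b c -> ole a c.
Proof. apply ole_trans. Qed.

Lemma ole_S x : ole x (OS x).
Proof.
  induction x as [|x IH|f IH].
  - constructor.
  - apply ole_succ; auto.
  - apply ole_limiting. intro n. eapply ole_tr. apply IH.
    apply ole_succ. apply ole_cocone with n. apply ole_refl.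
Qed.

Lemma olt_ole a b : olt a b -> ole a b.
Proof. intro H. eapply ole_tr. apply ole_S. exact H. Qed.

Lemma olt_ole_tr a b c : olt a b -> ole b c -> olt a c.
Proof. unfold olt. intros. eapply ole_tr; eauto. Qed.

Lemma ole_olt_tr a b c : ole a b -> olt b c -> olt a c.
Proof. unfold olt. intros. eapply ole_tr; [apply ole_succ; exact H|exact H0]. Qed.

Lemma olt_tr a b c : olt a b -> olt b c -> olt a c.
Proof. intros. eapply olt_ole_tr; eauto. apply olt_ole; auto. Qed.

Lemma olt_irrefl a : ~ olt a a.
Proof.
  rewrite olt_iff. induction a as [|a IH|f IH]; intro H.
  - exact (lt'_Z _ H).
  - apply lt'_S in H. apply IH. exact H.
  - apply lt'_L in H. destruct H as [n Hn].
    apply (IH n). change (lt' (OL f) (f n)) in Hn. apply olt_iff in Hn. apply olt_iff.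
    unfold olt in *. eapply ole_tr. 2: exact Hn.
    apply ole_succ. apply ole_cocone with n. apply ole_refl.
Qed.

Lemma olt_wf : well_founded olt.
Proof.
  assert (H : forall b a, ole a b -> Acc olt a).
  { induction b as [|b IH|g IH]; intros a Ha; constructor; intros c Hc.
    - pose proof (olt_ole_tr _ _ _ Hc Ha) as H. apply olt_iff in H. destruct (lt'_Z _ H).
    - pose proof (olt_ole_tr _ _ _ Hc Ha) as H. apply olt_iff in H. apply lt'_S in H.
      apply IH. apply ole_iff. exact H.
    - pose proof (olt_ole_tr _ _ _ Hc Ha) as H. apply olt_iff in H. apply lt'_L in H.
      destruct H as [n Hn]. apply (IH n). apply olt_ole. apply olt_iff. exact Hn. }
  intro a. apply (H a a). apply ole_refl.
Qed.

Lemma le'_total a : forall b, le' a b \/ lt' b a.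
Proof.
  induction a as [|a IH|f IH]; intro b.
  - left; exact I.
  - induction b as [|b IHb|g IHg].
    + right. exact I.
    + destruct (IH b) as [H|H].
      * left. apply le'_S, lt'_S. exact H.
      * right. apply lt'_S. exact H.
    + destruct (classic (exists n, lt' a (g n))) as [[n Hn]|Hn].
      * left. apply le'_S, lt'_L. exists n. exact Hn.
      * right. apply lt'_S. apply le'_L. intro n.
        destruct (IHg n) as [H|H].
        -- exfalso. apply Hn. exists n. exact H.
        -- exact H.
  - destruct (classic (forall n, le' (f n) b)) as [H|H].
    + left. apply le'_L. exact H.
    + right. apply not_all_ex_not in H. destruct H as [n Hn].
      destruct (IH n b) as [H|H]; [contradiction|].
      apply lt'_L. exists n. exact H.
Qed.

Lemma total a b : ole a b \/ olt b a.
Proof. rewrite ole_iff, olt_iff. apply le'_total. Qed.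

Lemma not_ole a b : ~ ole a b -> olt b a.
Proof. intro H. destruct (total a b); tauto. Qed.
Lemma not_olt a b : ~ olt a b -> ole b a.
Proof. intro H. destruct (total b a); tauto. Qed.

Lemma olt_L_inv v g : olt v (OL g) -> exists n, olt v (g n).
Proof. rewrite olt_iff. intro H. apply lt'_L in H. destruct H as [n Hn]. exists n. apply olt_iff. exact Hn. Qed.
Lemma olt_S_inv v b : olt v (OS b) -> ole v b.
Proof. rewrite olt_iff, ole_iff. intro H. exact H. Qed.
Lemma olt_Z_inv v : olt v OZ -> False.
Proof. rewrite olt_iff. apply lt'_Z. Qed.

Lemma olt_L v g n : olt v (g n) -> olt v (OL g).
Proof. intro H. apply ole_cocone with n. exact H. Qed.
Lemma ole_L v g n : ole v (g n) -> ole v (OL g).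
Proof. intro H. apply ole_cocone with n. exact H. Qed.
Lemma olt_S_self x : olt x (OS x).
Proof. apply ole_refl. Qed.
Lemma ole_olt_contra a b : ole a b -> olt b a -> False.
Proof. intros H1 H2. apply (olt_irrefl a). eapply ole_olt_tr; eauto. Qed.


Lemma le_add_r a x : ole a (oadd a x).
Proof.
  induction x as [|x IH|f IH]; simpl.
  - apply ole_refl.
  - eapply ole_tr. exact IH. apply ole_S.
  - apply ole_L with 0. apply IH.
Qed.

Lemma le_add_l a b : ole b (oadd a b).
Proof.
  induction b as [|b IH|f IH]; simpl.
  - constructor.
  - apply ole_succ. exact IH.
  - apply ole_limiting. intro n. apply ole_L with n. apply IH.
Qed.

Lemma oadd_mono_r a b b' : ole b b' -> ole (oadd a b) (oadd a b').
Proof.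
  induction 1; simpl.
  - apply le_add_r.
  - eapply ole_tr; eauto.
  - apply ole_succ. auto.
  - apply ole_L with k. auto.
  - apply ole_limiting. auto.
Qed.

Lemma oadd_mono_l a a' b : ole a a' -> ole (oadd a b) (oadd a' b).
Proof.
  intro H. induction b as [|b IH|f IH]; simpl.
  - exact H.
  - apply ole_succ. exact IH.
  - apply ole_limiting. intro n. apply ole_L with n. apply IH.
Qed.

Lemma oadd_mono a a' b b' : ole a a' -> ole b b' -> ole (oadd a b) (oadd a' b').
Proof. intros. eapply ole_tr. apply oadd_mono_l; eauto. apply oadd_mono_r; auto. Qed.

Lemma oadd_strict_r a b b' : olt b b' -> olt (oadd a b) (oadd a b').
Proof. unfold olt. intro H. apply (oadd_mono_r a (OS b) b' H). Qed.

Lemma oadd_cancel_lt a y1 y2 : olt (oadd a y1) (oadd a y2) -> olt y1 y2.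
Proof.
  intro H. destruct (total y2 y1) as [H1|H1]; auto.
  exfalso. apply (ole_olt_contra _ _ (oadd_mono_r a _ _ H1) H).
Qed.

Lemma oadd_cancel_le a y1 y2 : ole (oadd a y1) (oadd a y2) -> ole y1 y2.
Proof.
  intro H. destruct (total y1 y2) as [H1|H1]; auto.
  exfalso. apply (ole_olt_contra _ _ H (oadd_strict_r a _ _ H1)).
Qed.

Lemma oadd_assoc a b c : oadd (oadd a b) c = oadd a (oadd b c).
Proof.
  induction c as [|c IH|f IH]; simpl; auto.
  - rewrite IH. auto.
  - f_equal. apply functional_extensionality. auto.
Qed.

Lemma oadd_0_l x : oadd OZ x = x.
Proof.
  induction x as [|x IH|f IH]; simpl; auto.
  - rewrite IH; auto.
  - f_equal. apply functional_extensionality. auto.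
Qed.

Lemma ofin_add a b : oadd (ofin a) (ofin b) = ofin (a + b).
Proof. induction b; simpl. rewrite Nat.add_0_r; auto. rewrite Nat.add_succ_r. simpl. rewrite IHb. auto. Qed.

Lemma ofin_mono a b : a <= b -> ole (ofin a) (ofin b).
Proof.
  induction 1. apply ole_refl. eapply ole_tr. exact IHle. apply ole_S.
Qed.

Lemma ofin_lt a b : a < b -> olt (ofin a) (ofin b).
Proof. intro H. unfold olt. apply (ofin_mono (S a) b H). Qed.

Lemma ofin_lt_omega n : olt (ofin n) omega.
Proof. apply olt_L with (S n). apply ofin_lt. auto. Qed.

Lemma ofin_le_omega n : ole (ofin n) omega.
Proof. apply olt_ole, ofin_lt_omega. Qed.

Lemma sub_exists a z : ole a z -> exists y, oeq z (oadd a y).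
Proof.
  revert a. induction z as [|z IH|g IH]; intros a H.
  - exists OZ. simpl. split; auto. constructor.
  - destruct (total a z) as [H1|H1].
    + destruct (IH a H1) as [y [Hy1 Hy2]]. exists (OS y). simpl. split; apply ole_succ; auto.
    + exists OZ. simpl. split; auto.
  - assert (Hc : forall n, exists y, (ole a (g n) -> oeq (g n) (oadd a y)) /\ (~ ole a (g n) -> y = OZ)).
    { intro n. destruct (classic (ole a (g n))) as [Hn|Hn].
      - destruct (IH n a Hn) as [y Hy]. exists y. split; auto. intro; contradiction.
      - exists OZ. split; auto. intro; contradiction. }
    set (y := fun n => proj1_sig (constructive_indefinite_description _ (Hc n))).
    assert (Hy : forall n, (ole a (g n) -> oeq (g n) (oadd a (y n))) /\ (~ ole a (g n) -> y n = OZ)).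
    { intro n. unfold y. destruct (constructive_indefinite_description _ (Hc n)); simpl; auto. }
    exists (OL y). simpl. split.
    + apply ole_limiting. intro n. destruct (total a (g n)) as [H1|H1].
      * apply ole_L with n. apply (proj1 (Hy n) H1).
      * apply ole_L with n. eapply ole_tr. apply olt_ole, H1. apply le_add_r.
    + apply ole_limiting. intro n. destruct (classic (ole a (g n))) as [H1|H1].
      * apply ole_L with n. apply (proj1 (Hy n) H1).
      * rewrite (proj2 (Hy n) H1). simpl. exact H.
Qed.

Definition one := OS OZ.

Lemma omul_mono_r a b b' : ole b b' -> ole (omul a b) (omul a b').
Proof.
  induction 1; simpl.
  - constructor.
  - eapply ole_tr; eauto.
  - apply oadd_mono_l. auto.
  - apply ole_L with k. auto.
  - apply ole_limiting. auto.
Qed.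

Lemma omul_mono_l a a' b : ole a a' -> ole (omul a b) (omul a' b).
Proof.
  intro H. induction b as [|b IH|f IH]; simpl.
  - constructor.
  - apply oadd_mono; auto.
  - apply ole_limiting. intro n. apply ole_L with n. apply IH.
Qed.

Lemma omul_fin_add a p q : omul a (ofin (p + q)) = oadd (omul a (ofin p)) (omul a (ofin q)).
Proof.
  induction q; simpl.
  - rewrite Nat.add_0_r. auto.
  - rewrite Nat.add_succ_r. simpl. rewrite IHq. apply oadd_assoc.
Qed.

Lemma omul_1_fin k : omul one (ofin k) = ofin k.
Proof. induction k; [reflexivity|]. change (OS (omul one (ofin k)) = OS (ofin k)). rewrite IHk; reflexivity. Qed.

Lemma omul_fin_1 a : omul a (ofin 1) = a.
Proof. simpl. apply oadd_0_l. Qed.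

Lemma fin_le_omul a m : ole one a -> ole (ofin m) (omul a (ofin m)).
Proof.
  intro H. induction m; simpl.
  - constructor.
  - eapply ole_tr. apply ole_succ, IHm. change (ole (oadd (omul a (ofin m)) one) (oadd (omul a (ofin m)) a)).
    apply oadd_mono_r. exact H.
Qed.

Lemma omul_fin_S_le a m : ole (omul a (ofin m)) (omul a (ofin (S m))).
Proof. simpl. apply le_add_r. Qed.

Lemma omul_fin_mono a m n : m <= n -> ole (omul a (ofin m)) (omul a (ofin n)).
Proof. intro H. apply omul_mono_r, ofin_mono, H. Qed.

Lemma omul_fin_omega a m : ole (omul a (ofin m)) (omul a omega).
Proof. simpl. apply ole_L with m. apply ole_refl. Qed.

Lemma one_le_exp x : ole one (oexpw x).
Proof.
  induction x as [|x IH|f IH]; simpl.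
  - apply ole_refl.
  - apply ole_L with 1. rewrite omul_fin_1. exact IH.
  - apply ole_L with 0. apply IH.
Qed.

Lemma oexpw_mono b b' : ole b b' -> ole (oexpw b) (oexpw b').
Proof.
  induction 1; simpl.
  - apply one_le_exp.
  - eapply ole_tr; eauto.
  - apply (omul_mono_l _ _ omega). auto.
  - apply ole_L with k. auto.
  - apply ole_limiting. auto.
Qed.

Lemma oexpw_one : oeq (oexpw one) omega.
Proof.
  change (oeq (OL (fun n => omul one (ofin n))) (OL ofin)).
  split; apply ole_limiting; intro n; apply ole_L with n;
  rewrite omul_1_fin; apply ole_refl.
Qed.

Lemma omega_le_exp b : ole one b -> ole omega (oexpw b).
Proof. intro H. eapply ole_tr. apply oexpw_one. apply oexpw_mono, H. Qed.

Lemma omul_omega_one : omul omega one = omega.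
Proof. change (oadd OZ omega = omega). apply oadd_0_l. Qed.

Lemma omega_le_omul b : ole one b -> ole omega (omul omega b).
Proof. intro H. rewrite <- omul_omega_one at 1. apply omul_mono_r, H. Qed.

Lemma not_one_le b : ~ ole one b -> ole b OZ.
Proof. intro H. apply not_ole in H. apply olt_S_inv in H. exact H. Qed.

Lemma ole_Z_oeq b : ole b OZ -> oeq b OZ.
Proof. split; auto. constructor. Qed.

Lemma olt_one_Z b : olt b one -> ole b OZ.
Proof. apply olt_S_inv. Qed.

Lemma exp_le_one b : ole b OZ -> ole (oexpw b) one.
Proof. intro H. apply (oexpw_mono _ _ H). Qed.

Lemma olt_Z_pos b : olt OZ b <-> ole one b.
Proof. reflexivity. Qed.


Fixpoint IR {T : Type} (lt : T -> T -> Prop) (g : Ord) (S : T -> Prop) : Prop :=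
  match g with
  | OZ => True
  | OS d => exists x, S x /\ IR lt d (fun z => S z /\ lt z x) /\ IR lt d (fun z => S z /\ lt x z)
  | OL f => forall n, IR lt (f n) S
  end.

Lemma IR_emb {T1 T2 : Type} (lt1 : T1 -> T1 -> Prop) (lt2 : T2 -> T2 -> Prop) (h : T1 -> T2) g :
  forall (S1 : T1 -> Prop) (S2 : T2 -> Prop),
  (forall z, S1 z -> S2 (h z)) ->
  (forall z1 z2, S1 z1 -> S1 z2 -> lt1 z1 z2 -> lt2 (h z1) (h z2)) ->
  IR lt1 g S1 -> IR lt2 g S2.
Proof.
  induction g as [|d IH|f IH]; simpl; intros S1 S2 HS Hm H.
  - exact I.
  - destruct H as [x [Hx [HL HR]]]. exists (h x). split; [auto|split].
    + eapply IH. 3: exact HL. simpl. intros z [Hz1 Hz2]. split; auto.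
      intros z1 z2 [H1 _] [H2 _]. auto.
    + eapply IH. 3: exact HR. simpl. intros z [Hz1 Hz2]. split; auto.
      intros z1 z2 [H1 _] [H2 _]. auto.
  - intro n. eapply IH; eauto.
Qed.

Lemma IR_sub {T : Type} (lt : T -> T -> Prop) g (S1 S2 : T -> Prop) :
  (forall z, S1 z -> S2 z) -> IR lt g S1 -> IR lt g S2.
Proof. intros HS. apply (IR_emb lt lt (fun z => z)); auto. Qed.

Lemma IR_mono_ord {T : Type} (lt : T -> T -> Prop) g g' :
  ole g g' -> forall S, IR lt g' S -> IR lt g S.
Proof.
  induction 1; intros S H'; simpl in *.
  - exact I.
  - auto.
  - destruct H' as [z [Hz [HL HR]]]. exists z. auto.
  - apply IHole. apply H'.
  - intro k. apply H0. exact H'.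
Qed.

Definition Rleft {T : Type} (lt : T -> T -> Prop) (x : T) (u v : option T) : Prop :=
  match u, v with
  | Some a, Some b => lt a b
  | None, Some a => a = x \/ lt x a
  | Some a, None => lt a x
  | None, None => False
  end.

Definition Rright {T : Type} (lt : T -> T -> Prop) (x : T) (u v : option T) : Prop :=
  match u, v with
  | Some a, Some b => lt a b
  | None, Some a => lt x a
  | Some a, None => a = x \/ lt a x
  | None, None => False
  end.

Lemma real_cmp {T : Type} (lt : T -> T -> Prop) F R x :
  is_prime_ext lt F R -> realizes lt F R x -> forall a, In a F -> lt a x \/ lt x a.
Proof.
  intros [_ [_ [H3 _]]] Hx a Ha. destruct (Hx a Ha) as [E1 E2].
  destruct (H3 a Ha); [right; apply E2|left; apply E1]; auto.
Qed.

Lemma ipe_left {T : Type} (lt : T -> T -> Prop) (Hirr : forall a, ~ lt a a)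
  (Htr : forall a b c, lt a b -> lt b c -> lt a c) F R x :
  is_prime_ext lt F R -> realizes lt F R x -> is_prime_ext lt (x :: F) (Rleft lt x).
Proof.
  intros HR Hx. split; [|split; [|split]].
  - intros a b _ _. simpl. tauto.
  - simpl. auto.
  - intros a [Ha|Ha].
    + subst. left. simpl. auto.
    + destruct (real_cmp lt F R x HR Hx a Ha); [right|left]; simpl; auto.
  - intros [u|] [v|] [w|] _ _ _; simpl; intros H1 H2; try contradiction.
    + eauto.
    + eauto.
    + destruct H2; [subst; auto|eauto].
    + right. destruct H1; [subst; auto|eauto].
    + destruct H1; [subst; eapply Hirr; eauto|eapply Hirr; eauto].
Qed.

Lemma ipe_right {T : Type} (lt : T -> T -> Prop) (Hirr : forall a, ~ lt a a)
  (Htr : forall a b c, lt a b -> lt b c -> lt a c) F R x :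
  is_prime_ext lt F R -> realizes lt F R x -> is_prime_ext lt (x :: F) (Rright lt x).
Proof.
  intros HR Hx. split; [|split; [|split]].
  - intros a b _ _. simpl. tauto.
  - simpl. auto.
  - intros a [Ha|Ha].
    + subst. right. simpl. auto.
    + destruct (real_cmp lt F R x HR Hx a Ha); [right|left]; simpl; auto.
  - intros [u|] [v|] [w|] _ _ _; simpl; intros H1 H2; try contradiction.
    + eauto.
    + right. destruct H2; [subst; auto|eauto].
    + destruct H1; [subst; auto|eauto].
    + eauto.
    + destruct H2; [subst; eapply Hirr; eauto|eapply Hirr; eauto].
Qed.

Lemma not_in_F {T : Type} (lt : T -> T -> Prop) (Hirr : forall a, ~ lt a a) F R x :
  is_prime_ext lt F R -> realizes lt F R x -> forall a, In a F -> a <> x.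
Proof.
  intros HR Hx a Ha E. subst. destruct (real_cmp lt F R x HR Hx x Ha); eapply Hirr; eauto.
Qed.

Lemma real_left {T : Type} (lt : T -> T -> Prop) (Hirr : forall a, ~ lt a a)
  (Htr : forall a b c, lt a b -> lt b c -> lt a c) F R x z :
  is_prime_ext lt F R -> realizes lt F R x -> realizes lt (x :: F) (Rleft lt x) z ->
  realizes lt F R z /\ lt z x.
Proof.
  intros HR Hx Hz.
  assert (Hzx : lt z x). { apply (proj2 (Hz x (or_introl eq_refl))). simpl. auto. }
  split; auto. intros a Ha. destruct (Hz a (or_intror Ha)) as [E1 E2]. simpl in E1, E2.
  destruct (Hx a Ha) as [F1 F2]. split.
  - rewrite E1. exact F1.
  - rewrite E2, <- F2. pose proof (not_in_F lt Hirr F R x HR Hx a Ha). tauto.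
Qed.

Lemma real_right {T : Type} (lt : T -> T -> Prop) (Hirr : forall a, ~ lt a a)
  (Htr : forall a b c, lt a b -> lt b c -> lt a c) F R x z :
  is_prime_ext lt F R -> realizes lt F R x -> realizes lt (x :: F) (Rright lt x) z ->
  realizes lt F R z /\ lt x z.
Proof.
  intros HR Hx Hz.
  assert (Hzx : lt x z). { apply (proj1 (Hz x (or_introl eq_refl))). simpl. auto. }
  split; auto. intros a Ha. destruct (Hz a (or_intror Ha)) as [E1 E2]. simpl in E1, E2.
  destruct (Hx a Ha) as [F1 F2]. split.
  - rewrite E1, <- F1. pose proof (not_in_F lt Hirr F R x HR Hx a Ha). tauto.
  - rewrite E2. exact F2.
Qed.

Lemma G1 {T : Type} (lt : T -> T -> Prop) (Hirr : forall a, ~ lt a a)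
  (Htr : forall a b c, lt a b -> lt b c -> lt a c) g :
  forall F, rkge lt g F -> forall R, is_prime_ext lt F R -> IR lt g (fun z => realizes lt F R z).
Proof.
  induction g as [|d IH|f IH]; simpl; intros F H R HR.
  - exact I.
  - destruct (H R HR) as [x [Hx Hd]]. exists x. split; [exact Hx|split].
    + eapply IR_sub. 2: apply (IH (x :: F) Hd (Rleft lt x) (ipe_left lt Hirr Htr F R x HR Hx)).
      intros z Hz. apply (real_left lt Hirr Htr F R x z HR Hx Hz).
    + eapply IR_sub. 2: apply (IH (x :: F) Hd (Rright lt x) (ipe_right lt Hirr Htr F R x HR Hx)).
      intros z Hz. apply (real_right lt Hirr Htr F R x z HR Hx Hz).
  - intro n. apply IH; auto.
Qed.


Lemma ipe_restrict {T : Type} (lt : T -> T -> Prop) x F R :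
  is_prime_ext lt (x :: F) R -> is_prime_ext lt F R.
Proof.
  intros [H1 [H2 [H3 H4]]]. split; [|split; [|split]].
  - intros a b Ha Hb. apply H1; right; auto.
  - auto.
  - intros a Ha. apply H3. right; auto.
  - intros u v w Hu Hv Hw. apply H4; destruct u, v, w; simpl in *; auto.
Qed.

Lemma same_gap {T : Type} (lt : T -> T -> Prop) F R R0 x z :
  realizes lt F R x -> realizes lt F R0 x -> realizes lt F R z -> realizes lt F R0 z.
Proof.
  intros H1 H2 H3 a Ha. specialize (H1 a Ha). specialize (H2 a Ha). specialize (H3 a Ha). tauto.
Qed.

Lemma R_asym {T : Type} (lt : T -> T -> Prop) (Hirr : forall a, ~ lt a a) F R u v :
  is_prime_ext lt F R -> inD F u -> inD F v -> R u v -> R v u -> False.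
Proof.
  intros [H1 [H2 [H3 H4]]] Hu Hv E1 E2. pose proof (H4 u v u Hu Hv Hu E1 E2) as E.
  destruct u as [a|]; simpl in Hu.
  - apply (Hirr a). apply (H1 a a Hu Hu). exact E.
  - apply H2. exact E.
Qed.

Lemma ext_real_left {T : Type} (lt : T -> T -> Prop) (Hirr : forall a, ~ lt a a)
  (Htr : forall a b c, lt a b -> lt b c -> lt a c) x F R' z :
  is_prime_ext lt (x :: F) R' -> R' None (Some x) -> realizes lt F R' z -> lt z x ->
  realizes lt (x :: F) R' z.
Proof.
  intros HR' Hn Hz Hzx a [Ha|Ha].
  - subst. split; split; intro H.
    + exfalso. apply (Hirr z). eauto.
    + exfalso. eapply (R_asym lt Hirr _ _ None (Some a) HR'); simpl; auto.
    + exact Hn.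
    + exact Hzx.
  - apply Hz; auto.
Qed.

Lemma ext_real_right {T : Type} (lt : T -> T -> Prop) (Hirr : forall a, ~ lt a a)
  (Htr : forall a b c, lt a b -> lt b c -> lt a c) x F R' z :
  is_prime_ext lt (x :: F) R' -> R' (Some x) None -> realizes lt F R' z -> lt x z ->
  realizes lt (x :: F) R' z.
Proof.
  intros HR' Hn Hz Hzx a [Ha|Ha].
  - subst. split; split; intro H.
    + exact Hn.
    + exact Hzx.
    + exfalso. apply (Hirr z). eauto.
    + exfalso. eapply (R_asym lt Hirr _ _ None (Some a) HR'); simpl; auto.
  - apply Hz; auto.
Qed.

Lemma not_real_ex {T : Type} (lt : T -> T -> Prop) F R x :
  ~ realizes lt F R x -> exists a, In a F /\
    ~ ((lt a x <-> R (Some a) None) /\ (lt x a <-> R None (Some a))).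
Proof.
  intro H. apply not_all_ex_not in H. destruct H as [a Ha]. exists a.
  apply imply_to_and in Ha. exact Ha.
Qed.

Lemma mismatch_left {T : Type} (lt : T -> T -> Prop) (Hirr : forall a, ~ lt a a)
  (Htr : forall a b c, lt a b -> lt b c -> lt a c) F R R' x z :
  is_prime_ext lt F R -> realizes lt F R x -> is_prime_ext lt (x :: F) R' ->
  R' None (Some x) -> ~ realizes lt F R' x -> realizes lt F R' z -> lt z x.
Proof.
  intros HR Hx HR' Hn Hd Hz.
  destruct (not_real_ex lt F R' x Hd) as [a [Ha Hm]].
  pose proof HR' as [H1 [H2 [H3 H4]]].
  assert (Hax : In a (x :: F)) by (right; auto).
  assert (Hxx : In x (x :: F)) by (left; auto).
  destruct (real_cmp lt F R x HR Hx a Ha) as [C|C];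
  destruct (H3 a Hax) as [D|D].
  - apply Htr with a; auto. apply (proj2 (Hz a Ha)). exact D.
  - exfalso. apply Hm. split; split; intro; auto.
    + exfalso. eapply Hirr; eauto.
    + exfalso. eapply (R_asym lt Hirr _ _ None (Some a) HR'); simpl; auto.
  - exfalso. apply Hm. split; split; intro; auto.
    + exfalso. eapply Hirr; eauto.
    + exfalso. eapply (R_asym lt Hirr _ _ None (Some a) HR'); simpl; auto.
  - exfalso. assert (E : R' (Some x) (Some a)) by (apply H1; auto).
    pose proof (H4 (Some x) (Some a) None Hxx Hax I E D) as E2.
    eapply (R_asym lt Hirr _ _ None (Some x) HR'); simpl; auto.
Qed.

Lemma mismatch_right {T : Type} (lt : T -> T -> Prop) (Hirr : forall a, ~ lt a a)
  (Htr : forall a b c, lt a b -> lt b c -> lt a c) F R R' x z :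
  is_prime_ext lt F R -> realizes lt F R x -> is_prime_ext lt (x :: F) R' ->
  R' (Some x) None -> ~ realizes lt F R' x -> realizes lt F R' z -> lt x z.
Proof.
  intros HR Hx HR' Hn Hd Hz.
  destruct (not_real_ex lt F R' x Hd) as [a [Ha Hm]].
  pose proof HR' as [H1 [H2 [H3 H4]]].
  assert (Hax : In a (x :: F)) by (right; auto).
  assert (Hxx : In x (x :: F)) by (left; auto).
  destruct (real_cmp lt F R x HR Hx a Ha) as [C|C];
  destruct (H3 a Hax) as [D|D].
  - exfalso. assert (E : R' (Some a) (Some x)) by (apply H1; auto).
    pose proof (H4 None (Some a) (Some x) I Hax Hxx D E) as E2.
    eapply (R_asym lt Hirr _ _ None (Some x) HR'); simpl; auto.
  - exfalso. apply Hm. split; split; intro; auto.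
    + exfalso. eapply Hirr; eauto.
    + exfalso. eapply (R_asym lt Hirr _ _ None (Some a) HR'); simpl; auto.
  - exfalso. apply Hm. split; split; intro; auto.
    + exfalso. eapply Hirr; eauto.
    + exfalso. eapply (R_asym lt Hirr _ _ None (Some a) HR'); simpl; auto.
  - apply Htr with a; auto. apply (proj1 (Hz a Ha)). exact D.
Qed.

Lemma G2 {T : Type} (lt : T -> T -> Prop) (Hirr : forall a, ~ lt a a)
  (Htr : forall a b c, lt a b -> lt b c -> lt a c) g :
  forall F, (forall R, is_prime_ext lt F R -> IR lt g (fun z => realizes lt F R z)) -> rkge lt g F.
Proof.
  induction g as [|d IH|f IH]; simpl; intros F H.
  - exact I.
  - intros R HR. destruct (H R HR) as [x [Hx [HL HRt]]]. exists x. split; [exact Hx|].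
    apply IH. intros R' HR'. pose proof (ipe_restrict lt x F R' HR') as HR0.
    assert (Hc : R' None (Some x) \/ R' (Some x) None).
    { destruct HR' as [_ [_ [H3 _]]]. apply H3. left; auto. }
    destruct (classic (realizes lt F R' x)) as [Hs|Hd].
    + destruct Hc as [Hc|Hc].
      * eapply IR_sub. 2: exact HL. intros z [Hz1 Hz2]. simpl.
        apply (ext_real_left lt Hirr Htr); auto. apply (same_gap lt F R R' x z Hx Hs Hz1).
      * eapply IR_sub. 2: exact HRt. intros z [Hz1 Hz2]. simpl.
        apply (ext_real_right lt Hirr Htr); auto. apply (same_gap lt F R R' x z Hx Hs Hz1).
    + pose proof (IR_mono_ord lt d (OS d) (ole_S d) _ (H R' HR0)) as Hd'.
      eapply IR_sub. 2: exact Hd'. intros z Hz. simpl.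
      destruct Hc as [Hc|Hc].
      * apply (ext_real_left lt Hirr Htr); auto. apply (mismatch_left lt Hirr Htr F R R' x z HR Hx HR' Hc Hd Hz).
      * apply (ext_real_right lt Hirr Htr); auto. apply (mismatch_right lt Hirr Htr F R R' x z HR Hx HR' Hc Hd Hz).
  - intro n. apply IH. intros R HR. apply (H R HR n).
Qed.


Definition Iv (lo hi : Ord) : Ord -> Prop := fun z => ole lo z /\ olt z hi.

Lemma Iv_sub lo hi lo' hi' : ole lo' lo -> ole hi hi' -> forall z, Iv lo hi z -> Iv lo' hi' z.
Proof. intros H1 H2 z [Hz1 Hz2]. split. eapply ole_tr; eauto. eapply olt_ole_tr; eauto. Qed.

Lemma dbl g d : (forall lo, IR olt g (Iv lo (oadd lo d))) ->
  forall lo, IR olt (OS g) (Iv lo (oadd lo (oadd (OS d) d))).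
Proof.
  intros H lo. simpl. exists (oadd lo d). split; [split|split].
  - apply le_add_r.
  - apply oadd_strict_r. unfold olt. apply le_add_r.
  - eapply IR_sub. 2: apply (H lo). intros z [Hz1 Hz2]. split; [split|]; auto.
    eapply olt_ole_tr. exact Hz2. apply oadd_mono_r. eapply ole_tr. apply ole_S. apply le_add_r.
  - eapply IR_sub. 2: apply (H (OS (oadd lo d))). intros z [Hz1 Hz2]. split; [split|].
    + eapply ole_tr. 2: exact Hz1. eapply ole_tr. apply (le_add_r lo d). apply ole_S.
    + change (OS (oadd lo d)) with (oadd lo (OS d)) in Hz2. rewrite oadd_assoc in Hz2. exact Hz2.
    + exact Hz1.
Qed.

Lemma LB_fin n : forall lo, IR olt (ofin n) (Iv lo (oadd lo (ofin (2 ^ n - 1)))).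
Proof.
  induction n; intro lo.
  - exact I.
  - pose proof (dbl _ _ IHn lo) as H. change (OS (ofin (2 ^ n - 1))) with (ofin (S (2 ^ n - 1))) in H.
    rewrite ofin_add in H.
    replace (S (2 ^ n - 1) + (2 ^ n - 1)) with (2 ^ S n - 1) in H. exact H.
    simpl. pose proof (Nat.pow_nonzero 2 n). lia.
Qed.

Lemma E1 b : ole one b -> ole (oadd one (oexpw b)) (oexpw b).
Proof.
  induction b as [|b IH|f IH]; intro Hb.
  - exfalso. apply (olt_irrefl OZ). exact Hb.
  - change (ole (OL (fun n => oadd one (omul (oexpw b) (ofin n)))) (OL (fun n => omul (oexpw b) (ofin n)))).
    apply ole_limiting. intro n. apply ole_L with (S n).
    change (S n) with (1 + n). rewrite omul_fin_add. apply oadd_mono_l. rewrite omul_fin_1. apply one_le_exp.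
  - change (ole (OL (fun n => oadd one (oexpw (f n)))) (OL (fun n => oexpw (f n)))).
    apply ole_limiting. intro n. destruct (classic (ole one (f n))) as [H|H].
    + apply ole_L with n. auto.
    + apply not_one_le in H. eapply ole_tr. apply oadd_mono_r. apply (exp_le_one _ H).
      change (oadd one one) with (ofin 2). eapply ole_tr. apply ofin_le_omega.
      change (ole omega (oexpw (OL f))). apply omega_le_exp. exact Hb.
Qed.

Lemma E2 b : ole one b -> forall m, ole (oadd one (omul (oexpw b) (ofin (S m)))) (omul (oexpw b) (ofin (S m))).
Proof.
  intros Hb m. induction m.
  - rewrite omul_fin_1. apply E1, Hb.
  - change (omul (oexpw b) (ofin (S (S m)))) with (oadd (omul (oexpw b) (ofin (S m))) (oexpw b)).
    rewrite <- oadd_assoc. apply oadd_mono_l. exact IHm.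
Qed.

Lemma M_N b : (forall lo, IR olt (omul omega b) (Iv lo (oadd lo (oexpw b)))) -> ole one b ->
  forall k lo, IR olt (oadd (omul omega b) (ofin k)) (Iv lo (oadd lo (omul (oexpw b) (ofin (2 ^ k))))).
Proof.
  intros HM Hb k. induction k; intro lo.
  - simpl. rewrite oadd_0_l. apply HM.
  - pose proof (dbl _ _ IHk lo) as H. eapply IR_sub. 2: exact H.
    apply Iv_sub. apply ole_refl. apply oadd_mono_r.
    assert (Hp : 2 ^ k <> 0) by (apply Nat.pow_nonzero; lia).
    remember (2 ^ k) as p. destruct p as [|m]; [lia|].
    change (OS (omul (oexpw b) (ofin (S m)))) with (oadd (omul (oexpw b) (ofin (S m))) one).
    rewrite oadd_assoc. replace (2 ^ S k) with (S m + S m) by (simpl; lia).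
    rewrite omul_fin_add. apply oadd_mono_r. apply E2, Hb.
Qed.

Lemma M b : forall lo, IR olt (omul omega b) (Iv lo (oadd lo (oexpw b))).
Proof.
  induction b as [|b IH|f IH]; intro lo.
  - exact I.
  - change (forall n, IR olt (oadd (omul omega b) (ofin n)) (Iv lo (oadd lo (oexpw (OS b))))).
    intro n. destruct (classic (ole one b)) as [Hb|Hb].
    + eapply IR_sub. 2: apply (M_N b IH Hb n lo). apply Iv_sub. apply ole_refl.
      apply oadd_mono_r. apply omul_fin_omega.
    + apply not_one_le in Hb. eapply IR_mono_ord.
      2: eapply IR_sub. 3: apply (LB_fin n lo).
      * rewrite <- (oadd_0_l (ofin n)) at 2. apply oadd_mono_l. apply (omul_mono_r omega b OZ Hb).
      * apply Iv_sub. apply ole_refl. apply oadd_mono_r.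
        eapply ole_tr. apply ofin_le_omega. change (ole omega (omul (oexpw b) omega)).
        apply ole_limiting. intro m. apply ole_L with m. apply fin_le_omul, one_le_exp.
  - change (forall n, IR olt (omul omega (f n)) (Iv lo (oadd lo (oexpw (OL f))))).
    intro n. eapply IR_sub. 2: apply (IH n lo). apply Iv_sub. apply ole_refl.
    apply oadd_mono_r. apply ole_L with n. apply ole_refl.
Qed.

Lemma LB b c al : ole one b -> 1 <= c -> ole (omul (oexpw b) (ofin c)) al ->
  IR olt (oadd (omul omega b) (ofin (Nat.log2 c))) (fun z => olt z al).
Proof.
  intros Hb Hc Ha. eapply IR_sub. 2: apply (M_N b (M b) Hb (Nat.log2 c) OZ).
  intros z [_ Hz]. rewrite oadd_0_l in Hz. eapply olt_ole_tr. exact Hz.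
  eapply ole_tr. 2: exact Ha. apply omul_fin_mono. apply Nat.log2_spec. lia.
Qed.


Lemma log_min p q : 1 <= p -> 1 <= q -> S (Nat.min (Nat.log2 p) (Nat.log2 q)) <= Nat.log2 (p + q).
Proof.
  intros Hp Hq. apply Nat.log2_le_pow2. lia.
  pose proof (Nat.log2_spec p Hp). pose proof (Nat.log2_spec q Hq).
  assert (2 ^ Nat.min (Nat.log2 p) (Nat.log2 q) <= 2 ^ Nat.log2 p) by (apply Nat.pow_le_mono_r; lia).
  assert (2 ^ Nat.min (Nat.log2 p) (Nat.log2 q) <= 2 ^ Nat.log2 q) by (apply Nat.pow_le_mono_r; lia).
  rewrite Nat.pow_succ_r'. lia.
Qed.

Lemma ocombine X d a b : ole d (oadd X (ofin a)) -> ole d (oadd X (ofin b)) ->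
  ole (OS d) (oadd X (ofin (S (Nat.min a b)))).
Proof.
  intros Ha Hb. change (ole (OS d) (OS (oadd X (ofin (Nat.min a b))))). apply ole_succ.
  destruct (Nat.min_spec a b) as [[_ E]|[_ E]]; rewrite E; auto.
Qed.

Lemma fin_below x n : olt x (ofin n) -> exists i, i < n /\ oeq x (ofin i).
Proof.
  induction n; intro H.
  - destruct (olt_Z_inv _ H).
  - apply olt_S_inv in H. destruct (total (ofin n) x) as [H1|H1].
    + exists n. split; auto. split; auto.
    + destruct (IHn H1) as [i [Hi E]]. exists i. split; auto.
Qed.

Lemma sub_ex' a z : exists y, ole a z -> oeq z (oadd a y).
Proof.
  destruct (classic (ole a z)) as [H|H].
  - destruct (sub_exists a z H) as [y Hy]. exists y. auto.
  - exists OZ. intro; contradiction.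
Qed.

Definition osub a z := proj1_sig (constructive_indefinite_description _ (sub_ex' a z)).

Lemma osub_spec a z : ole a z -> oeq z (oadd a (osub a z)).
Proof. unfold osub. destruct (constructive_indefinite_description _ (sub_ex' a z)). simpl. auto. Qed.

Lemma shift_IR a b g (S : Ord -> Prop) :
  (forall z, S z -> ole a z /\ olt z (oadd a b)) -> IR olt g S -> IR olt g (fun y => olt y b).
Proof.
  intros HS. apply IR_emb with (h := osub a).
  - intros z Hz. destruct (HS z Hz) as [H1 H2]. destruct (osub_spec a z H1) as [E1 E2].
    apply (oadd_cancel_lt a). eapply ole_olt_tr. exact E2. exact H2.
  - intros z1 z2 Hz1 Hz2 Hlt. destruct (HS z1 Hz1) as [H1 _]. destruct (HS z2 Hz2) as [H2 _].
    destruct (osub_spec a z1 H1) as [E1 E2]. destruct (osub_spec a z2 H2) as [F1 F2].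
    apply (oadd_cancel_lt a). eapply ole_olt_tr. exact E2. eapply olt_ole_tr. exact Hlt. exact F1.
Qed.

Lemma Fin g : forall n (P : Ord -> Prop), (forall z, P z -> olt z (ofin n)) -> IR olt g P ->
  ole g (ofin (Nat.log2 (n + 1))).
Proof.
  induction g as [|d IH|f IH]; intros n P HS H; simpl in H.
  - constructor.
  - destruct H as [x [Hx [HL HR]]].
    destruct (fin_below x n (HS x Hx)) as [i [Hi [E1 E2]]].
    assert (H1 : ole d (ofin (Nat.log2 (i + 1)))).
    { apply (IH i (fun z => P z /\ olt z x)). 2: exact HL. intros z [_ Hz]. eapply olt_ole_tr; eauto. }
    assert (H2 : ole d (ofin (Nat.log2 (n - S i + 1)))).
    { apply (IH (n - S i) (fun y => olt y (ofin (n - S i)))). auto.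
      eapply shift_IR with (a := OS x). 2: exact HR.
      intros z [Hz1 Hz2]. split. exact Hz2. eapply olt_ole_tr. apply (HS z Hz1).
        eapply ole_tr. 2: apply oadd_mono_l. 2: apply ole_succ, E2.
        change (OS (ofin i)) with (ofin (S i)). rewrite ofin_add.
        apply ofin_mono. lia. }
    rewrite <- (oadd_0_l (ofin (Nat.log2 (i+1)))) in H1.
    rewrite <- (oadd_0_l (ofin (Nat.log2 (n - S i + 1)))) in H2.
    pose proof (ocombine _ _ _ _ H1 H2) as H3. rewrite oadd_0_l in H3.
    eapply ole_tr. exact H3. apply ofin_mono.
    replace (n + 1) with ((i + 1) + (n - S i + 1)) by lia. apply log_min; lia.
  - apply ole_limiting. intro k. apply (IH k n P HS (H k)).
Qed.

Lemma split_mul a x c : olt x (omul a (ofin (S c))) ->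
  exists m, m <= c /\ ole (omul a (ofin m)) x /\ olt x (omul a (ofin (S m))).
Proof.
  induction c; intro H.
  - exists 0. split; auto. split; auto. constructor.
  - destruct (total (omul a (ofin (S c))) x) as [H1|H1].
    + exists (S c). auto.
    + destruct (IHc H1) as [m [Hm Hm']]. exists m. split; [lia|auto].
Qed.

Lemma Dlem b : ole one b -> forall v, olt v (oexpw b) ->
  exists b', olt b' b /\ exists m, olt v (omul (oexpw b') (ofin (S m))).
Proof.
  induction b as [|b IH|f IH]; intros Hb v Hv.
  - exfalso. apply (olt_irrefl OZ). exact Hb.
  - change (olt v (OL (fun n => omul (oexpw b) (ofin n)))) in Hv.
    apply olt_L_inv in Hv. destruct Hv as [n Hn]. exists b. split. apply ole_refl.
    exists n. eapply olt_ole_tr. exact Hn. apply omul_fin_S_le.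
  - change (olt v (OL (fun n => oexpw (f n)))) in Hv.
    apply olt_L_inv in Hv. destruct Hv as [n Hn].
    destruct (classic (ole one (f n))) as [H|H].
    + destruct (IH n H v Hn) as [b' [Hb' Hm]]. exists b'. split; auto.
      eapply olt_ole_tr. exact Hb'. apply ole_L with n. apply ole_refl.
    + apply not_one_le in H. exists OZ. split. exact Hb. exists 0.
      rewrite omul_fin_1. eapply olt_ole_tr. exact Hn. apply exp_le_one, H.
Qed.


Definition UBprop (b : Ord) : Prop := forall g c v (P : Ord -> Prop), 1 <= c ->
  olt v (omul (oexpw b) (ofin (Datatypes.S c))) -> (forall z, P z -> olt z v) -> IR olt g P ->
  ole g (oadd (omul omega b) (ofin (Nat.log2 c))).

Definition Vprop (b : Ord) : Prop := forall v, olt v (oexpw b) ->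
  exists bd, olt bd (omul omega b) /\
    forall g (P : Ord -> Prop), (forall z, P z -> olt z v) -> IR olt g P -> ole g bd.

Lemma UBV : forall b, ole one b -> UBprop b /\ Vprop b.
Proof.
  intro b0. induction b0 as [b IH] using (well_founded_induction olt_wf). intro Hb.
  assert (HV : Vprop b).
  { intros v Hv. destruct (Dlem b Hb v Hv) as [b' [Hb' [m Hm]]].
    destruct (classic (ole one b')) as [H1|H1].
    - destruct (IH b' Hb' H1) as [HU _].
      exists (oadd (omul omega b') (ofin (Nat.log2 (Datatypes.S m)))). split.
      + unfold olt. change (OS (oadd (omul omega b') (ofin (Nat.log2 (Datatypes.S m)))))
          with (oadd (omul omega b') (ofin (Datatypes.S (Nat.log2 (Datatypes.S m))))).
        eapply ole_tr. apply oadd_mono_r. apply ofin_le_omega.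
        change (ole (omul omega (OS b')) (omul omega b)). apply omul_mono_r. exact Hb'.
      + intros g P HP Hg. apply (HU g (Datatypes.S m) v P); auto. lia.
        eapply olt_ole_tr. exact Hm. apply omul_fin_S_le.
    - apply not_one_le in H1. exists (ofin (Nat.log2 (Datatypes.S m + 1))). split.
      + unfold olt. change (ole (ofin (Datatypes.S (Nat.log2 (Datatypes.S m + 1)))) (omul omega b)).
        eapply ole_tr. apply ofin_le_omega. apply omega_le_omul. exact Hb.
      + intros g P HP Hg. apply (Fin g (Datatypes.S m) P); auto.
        intros z Hz. eapply olt_ole_tr. apply (olt_tr _ _ _ (HP z Hz) Hm).
        eapply ole_tr. apply omul_mono_l, exp_le_one, H1. rewrite omul_1_fin. apply ole_refl. }
  split; [|exact HV].
  intro g. induction g as [|d IHd|f IHf]; intros c v P Hc Hv HP Hg.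
  - constructor.
  - simpl in Hg. destruct Hg as [x [Hx [HL HR]]].
    set (X := oexpw b) in *.
    assert (Hxv : olt x v) by auto.
    destruct (split_mul X x c (olt_tr _ _ _ Hxv Hv)) as [m [Hmc [Hm1 Hm2]]].
    assert (Hsmall : olt d (omul omega b) -> ole (OS d) (oadd (omul omega b) (ofin (Nat.log2 c)))).
    { intro H. eapply ole_tr. exact H. apply le_add_r. }
    destruct (Nat.eq_dec m 0) as [Em|Em].
    + subst m. apply Hsmall. rewrite omul_fin_1 in Hm2.
      destruct (HV x Hm2) as [bd [Hbd Hbd2]].
      eapply ole_olt_tr. apply (Hbd2 d _ (fun z Hz => proj2 Hz) HL). exact Hbd.
    + assert (Hxv' : ole (omul X (ofin m)) v) by (apply olt_ole; eapply ole_olt_tr; eauto).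
      pose proof (osub_spec _ _ Hxv') as [Ev1 Ev2].
      set (v' := osub (omul X (ofin m)) v) in *.
      assert (HR' : IR olt d (fun y => olt y v')).
      { eapply shift_IR. 2: exact HR. intros z [Hz1 Hz2]. split.
        - eapply ole_tr. exact Hm1. apply olt_ole, Hz2.
        - eapply olt_ole_tr. apply (HP z Hz1). exact Ev1. }
      assert (Hv' : olt v' (omul X (ofin (Datatypes.S c - m)))).
      { apply (oadd_cancel_lt (omul X (ofin m))). rewrite <- omul_fin_add.
        replace (m + (Datatypes.S c - m)) with (Datatypes.S c) by lia.
        eapply ole_olt_tr. exact Ev2. exact Hv. }
      destruct (Nat.eq_dec m c) as [Emc|Emc].
      * subst m. apply Hsmall. replace (Datatypes.S c - c) with 1 in Hv' by lia.
        rewrite omul_fin_1 in Hv'. destruct (HV v' Hv') as [bd [Hbd Hbd2]].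
        eapply ole_olt_tr. apply (Hbd2 d _ (fun z Hz => Hz) HR'). exact Hbd.
      * assert (H1 : ole d (oadd (omul omega b) (ofin (Nat.log2 m)))).
        { apply (IHd m x (fun z => P z /\ olt z x)); auto. lia. intros z [_ Hz]. exact Hz. }
        assert (H2 : ole d (oadd (omul omega b) (ofin (Nat.log2 (c - m))))).
        { apply (IHd (c - m) v' (fun y => olt y v')); auto. lia.
          replace (Datatypes.S (c - m)) with (Datatypes.S c - m) by lia. exact Hv'. }
        eapply ole_tr. apply (ocombine _ _ _ _ H1 H2). apply oadd_mono_r. apply ofin_mono.
        assert (E : Nat.log2 c = Nat.log2 (m + (c - m))) by (f_equal; lia).
        rewrite E. apply log_min; lia.
  - apply ole_limiting. intro n. apply (IHf n c v P); auto.
Qed.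


Lemma AC b : forall x y, olt x (oexpw b) -> olt y (oexpw b) -> olt (oadd x y) (oexpw b).
Proof.
  induction b as [|b IH|f IH]; intros x y Hx Hy.
  - apply olt_S_inv in Hx. apply olt_S_inv in Hy. apply ole_succ.
    eapply ole_tr. apply (oadd_mono_r x _ _ Hy). exact Hx.
  - change (olt x (OL (fun n => omul (oexpw b) (ofin n)))) in Hx.
    change (olt y (OL (fun n => omul (oexpw b) (ofin n)))) in Hy.
    change (olt (oadd x y) (OL (fun n => omul (oexpw b) (ofin n)))).
    apply olt_L_inv in Hx. destruct Hx as [n1 H1]. apply olt_L_inv in Hy. destruct Hy as [n2 H2].
    apply olt_L with (n1 + n2). rewrite omul_fin_add.
    eapply ole_olt_tr. apply oadd_mono_l. apply olt_ole, H1. apply oadd_strict_r. exact H2.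
  - change (olt x (OL (fun n => oexpw (f n)))) in Hx.
    change (olt y (OL (fun n => oexpw (f n)))) in Hy.
    change (olt (oadd x y) (OL (fun n => oexpw (f n)))).
    apply olt_L_inv in Hx. destruct Hx as [n1 H1]. apply olt_L_inv in Hy. destruct Hy as [n2 H2].
    destruct (total (f n1) (f n2)) as [E|E].
    + apply olt_L with n2. apply IH; auto. eapply olt_ole_tr. exact H1. apply oexpw_mono, E.
    + apply olt_L with n1. apply IH; auto. eapply olt_ole_tr. exact H2. apply oexpw_mono, olt_ole, E.
Qed.

Lemma term_lt b B c : olt b B -> olt (omul (oexpw b) (ofin c)) (oexpw B).
Proof.
  intro H. eapply olt_ole_tr. 2: apply (oexpw_mono _ _ H).
  change (oexpw (OS b)) with (omul (oexpw b) omega).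
  eapply olt_ole_tr. 2: apply (omul_fin_omega _ (S c)).
  change (omul (oexpw b) (ofin (S c))) with (oadd (omul (oexpw b) (ofin c)) (oexpw b)).
  apply (oadd_strict_r _ OZ). apply one_le_exp.
Qed.

Lemma cnf_lt B l : Forall (fun p : Ord * nat => olt (fst p) B) l -> olt (cnf_eval l) (oexpw B).
Proof.
  induction 1 as [|[b c] l Hb Hl IHl].
  - apply one_le_exp.
  - simpl. apply AC; auto. apply term_lt. exact Hb.
Qed.

Lemma olt_below_irr alpha : forall a : below alpha, ~ lt_below alpha a a.
Proof. intros a. apply olt_irrefl. Qed.
Lemma olt_below_tr alpha : forall a b c : below alpha,
  lt_below alpha a b -> lt_below alpha b c -> lt_below alpha a c.
Proof. intros a b c. apply olt_tr. Qed.

Theorem theorem6p13 (alpha beta1 : Ord) (c1 : nat) (rest : list (Ord * nat)) :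
  ole omega alpha ->
  StronglySorted (fun p q : Ord * nat => olt (fst q) (fst p)) ((beta1, c1) :: rest) ->
  Forall (fun p : Ord * nat => 1 <= snd p) ((beta1, c1) :: rest) ->
  oeq alpha (cnf_eval ((beta1, c1) :: rest)) ->
  rank_is (lt_below alpha) (oadd (omul omega beta1) (ofin (Nat.log2 c1))).
Proof.
  intros Hom Hsort Hc [Ea1 Ea2].
  assert (Hc1 : 1 <= c1) by (inversion Hc; auto).
  apply StronglySorted_inv in Hsort. destruct Hsort as [_ Hrest].
  assert (Hr : olt (cnf_eval rest) (oexpw beta1)) by (apply cnf_lt; exact Hrest).
  simpl in Ea1, Ea2.
  set (X := oexpw beta1) in *.
  assert (Hlow : ole (omul X (ofin c1)) alpha) by (eapply ole_tr; [apply le_add_r|exact Ea2]).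
  assert (Hup : olt alpha (omul X (ofin (S c1)))).
  { eapply ole_olt_tr. exact Ea1. apply oadd_strict_r. exact Hr. }
  assert (Hb : ole one beta1).
  { destruct (classic (ole one beta1)) as [H|H]; auto. exfalso.
    apply not_one_le in H. apply (olt_irrefl omega).
    eapply ole_olt_tr. exact Hom. eapply olt_ole_tr. exact Hup.
    eapply ole_tr. apply omul_mono_l, exp_le_one, H. rewrite omul_1_fin. apply ofin_le_omega. }
  assert (H0 : olt OZ alpha) by (eapply olt_ole_tr; [apply ofin_lt_omega with (n := 0)|exact Hom]).
  split.
  - apply (G2 _ (olt_below_irr alpha) (olt_below_tr alpha)). intros R HR.
    pose proof (LB beta1 c1 alpha Hb Hc1 Hlow) as HL.
    set (d0 := exist (fun g => olt g alpha) OZ H0 : below alpha).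
    set (h := fun z => match excluded_middle_informative (olt z alpha) with
                       | left p => exist (fun g => olt g alpha) z p
                       | right _ => d0 end).
    apply (IR_emb olt (lt_below alpha) h _ (fun z => olt z alpha) _).
    + intros z _ a Ha. destruct Ha.
    + intros z1 z2 H1 H2 H12. unfold h.
      destruct (excluded_middle_informative (olt z1 alpha)); [|contradiction].
      destruct (excluded_middle_informative (olt z2 alpha)); [|contradiction].
      exact H12.
    + exact HL.
  - intros g Hg.
    set (R0 := fun (_ _ : option (below alpha)) => False).
    assert (HR0 : is_prime_ext (lt_below alpha) [] R0).
    { split; [|split; [|split]].
      - intros a b Ha. destruct Ha.
      - auto.
      - intros a Ha. destruct Ha.
      - intros u v w _ _ _ H. destruct H. }
    pose proof (G1 _ (olt_below_irr alpha) (olt_below_tr alpha) g [] Hg R0 HR0) as HI.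
    apply (IR_emb (lt_below alpha) olt (@proj1_sig _ _) _ _ (fun z => olt z alpha)) in HI.
    + destruct (UBV beta1 Hb) as [HU _].
      apply (HU g c1 alpha (fun z => olt z alpha)); auto.
    + intros z _. exact (proj2_sig z).
    + intros z1 z2 _ _ H. exact H.
Qed.
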